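(* For every $\rho>0$ there exists $\epsilon>0$ such that for all $x=x_0+x_1\mathbf e_1+x_2\mathbf e_2+x_3\mathbf e_3\in\mathbb H$ with $x_0^2+x_j^2<\epsilon$ for $j=1,2,3$, one has $|P_n(x)|<\rho^n$ for every $n\in\mathbb N$.
   Context: For $m\ge0$, $T^m_j=\frac{2(m-j+1)}{(m+1)(m+2)}$ ($0\le j\le m$), $c_m=\sum_{j=0}^m(-1)^jT^m_j$, and $P_m(x)=\frac1{c_m}\sum_{j=0}^mT^m_jx^{m-j}\overline{x}^{\,j}$, where $\overline{x}=x_0-x_1\mathbf e_1-x_2\mathbf e_2-x_3\mathbf e_3$ is the quaternionic conjugate. *)

(* Defs.v *)
From HB Require Import structures.
From mathcomp Require Import all_boot all_order all_algebra.
From mathcomp Require Import reals.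
Set Implicit Arguments. Unset Strict Implicit. Unset Printing Implicit Defensive.
Import Order.TTheory GRing.Theory Num.Theory.
Local Open Scope ring_scope.

Section Quat.
Variable R : realType.

Record quat := Quat { q0 : R; q1 : R; q2 : R; q3 : R }.

Definition qadd (x y : quat) : quat :=
  Quat (q0 x + q0 y) (q1 x + q1 y) (q2 x + q2 y) (q3 x + q3 y).

Definition qscale (a : R) (x : quat) : quat :=
  Quat (a * q0 x) (a * q1 x) (a * q2 x) (a * q3 x).

(* Hamilton product: e1^2 = e2^2 = e3^2 = -1, e1 e2 = e3, e2 e3 = e1, e3 e1 = e2 *)
Definition qmul (x y : quat) : quat :=
  Quat (q0 x * q0 y - q1 x * q1 y - q2 x * q2 y - q3 x * q3 y)
       (q0 x * q1 y + q1 x * q0 y + q2 x * q3 y - q3 x * q2 y)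
       (q0 x * q2 y - q1 x * q3 y + q2 x * q0 y + q3 x * q1 y)
       (q0 x * q3 y + q1 x * q2 y - q2 x * q1 y + q3 x * q0 y).

Definition qone : quat := Quat 1 0 0 0.
Definition qzero : quat := Quat 0 0 0 0.

Fixpoint qpow (x : quat) (n : nat) : quat :=
  match n with 0%N => qone | n'.+1 => qmul x (qpow x n') end.

Definition qconj (x : quat) : quat := Quat (q0 x) (- q1 x) (- q2 x) (- q3 x).

Definition qnorm (x : quat) : R :=
  Num.sqrt (q0 x ^+ 2 + q1 x ^+ 2 + q2 x ^+ 2 + q3 x ^+ 2).

Definition Tcoef (m j : nat) : R :=
  (2 * (m - j + 1)%N)%:R / ((m + 1) * (m + 2))%N%:R.

Definition ccoef (m : nat) : R := \sum_(j < m.+1) (-1) ^+ j * Tcoef m j.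

Definition Ppoly (m : nat) (x : quat) : quat :=
  qscale (ccoef m)^-1
    (\big[qadd/qzero]_(j < m.+1)
        qscale (Tcoef m j) (qmul (qpow x (m - j)) (qpow (qconj x) j))).

End Quat.

(* Main.v *)
Require Import Defs.
From HB Require Import structures.
From mathcomp Require Import all_boot all_order all_algebra.
From mathcomp Require Import reals.
From mathcomp Require Import ring lra zify.
Import Order.TTheory GRing.Theory Num.Theory.
Local Open Scope ring_scope.

Section L.
Variable R : realType.
Implicit Types x y : quat R.

Definition N2 x := q0 x ^+ 2 + q1 x ^+ 2 + q2 x ^+ 2 + q3 x ^+ 2.

Lemma N2_ge0 x : 0 <= N2 x.
Proof. rewrite /N2; nra. Qed.

Lemma qnorm_ge0 x : 0 <= qnorm x.
Proof. exact: sqrtr_ge0. Qed.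

Lemma qnorm_sqr x : qnorm x ^+ 2 = N2 x.
Proof. by rewrite /qnorm sqr_sqrtr // N2_ge0. Qed.

Lemma qnorm_mul x y : qnorm (qmul x y) = qnorm x * qnorm y.
Proof.
rewrite /qnorm -sqrtrM; last exact: (N2_ge0 x).
congr Num.sqrt; case: x => a b c d; case: y => e f g h /=; ring.
Qed.

Lemma qnorm_conj x : qnorm (qconj x) = qnorm x.
Proof. by rewrite /qnorm /= !sqrrN. Qed.

Lemma qnorm_one : qnorm (qone R) = 1.
Proof. by rewrite /qnorm /= expr1n !expr0n /= !addr0 sqrtr1. Qed.

Lemma qnorm_zero : qnorm (qzero R) = 0.
Proof. by rewrite /qnorm /= !expr0n /= !addr0 sqrtr0. Qed.

Lemma qnorm_pow x n : qnorm (qpow x n) = qnorm x ^+ n.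
Proof. elim: n => [|n IH] /=; first by rewrite qnorm_one. by rewrite qnorm_mul IH exprS. Qed.

Lemma qnorm_scale a x : qnorm (qscale a x) = `|a| * qnorm x.
Proof.
rewrite /qnorm -sqrtr_sqr -sqrtrM ?sqr_ge0 //; congr Num.sqrt; rewrite /=; ring.
Qed.

Lemma qnorm_add x y : qnorm (qadd x y) <= qnorm x + qnorm y.
Proof.
have hx := qnorm_ge0 x; have hy := qnorm_ge0 y.
rewrite -(ler_pXn2r (n:=2)) // ?nnegrE ?addr_ge0 ?qnorm_ge0 //.
rewrite qnorm_sqr sqrrD !qnorm_sqr.
set d := q0 x * q0 y + q1 x * q1 y + q2 x * q2 y + q3 x * q3 y.
have -> : N2 (qadd x y) = N2 x + N2 y + 2 * d by rewrite /N2 /d /=; ring.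
suff : d <= qnorm x * qnorm y by lra.
have L : d ^+ 2 <= (qnorm x * qnorm y) ^+ 2.
  rewrite exprMn !qnorm_sqr /N2 /d; clear d.
  case: x {hx} => a b c e; case: y {hy} => f g h i /=.
  rewrite -subr_ge0.
  have -> : (a ^+ 2 + b ^+ 2 + c ^+ 2 + e ^+ 2) * (f ^+ 2 + g ^+ 2 + h ^+ 2 + i ^+ 2) -
    (a * f + b * g + c * h + e * i) ^+ 2 =
    (a*g - b*f)^+2 + (a*h - c*f)^+2 + (a*i-e*f)^+2 + (b*h-c*g)^+2 + (b*i-e*g)^+2 + (c*i-e*h)^+2
    by ring.
  by rewrite !addr_ge0 ?sqr_ge0.
have p : 0 <= qnorm x * qnorm y by apply: mulr_ge0.
case: (lerP d 0) => hd; first by lra.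
by rewrite -(ler_pXn2r (n:=2)) // nnegrE ltW.
Qed.

Lemma qnorm_big m (F : 'I_m -> quat R) :
  qnorm (\big[@qadd R/qzero R]_(j < m) F j) <= \sum_(j < m) qnorm (F j).
Proof.
apply: (big_rec2 (fun a b => qnorm a <= b)); first by rewrite qnorm_zero.
move=> i a b _ H; apply: le_trans (qnorm_add _ _) _; lra.
Qed.

Definition S m : R := \sum_(j < m.+1) (-1) ^+ j * ((m - j + 1)%N)%:R.

Lemma S_rec m : S m.+1 = (m.+2)%:R - S m.
Proof.
rewrite /S big_ord_recl /= expr0 mul1r subn0 addn1; congr (_ + _).
rewrite -sumrN; apply: eq_bigr => j _; rewrite /bump /= add1n subSS exprS mulN1r mulNr //.
Qed.

Lemma S_val m : 2 * S m = (m.+2)%:R - (odd m)%:R.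
Proof.
elim: m => [|m IH].
  by rewrite /S big_ord1 expr0 mul1r subnn add0n mulr1 [odd 0]/= subr0.
rewrite S_rec mulrBr IH oddS; case: (odd m); rewrite [~~ _]/= -!natr1 ?mulr0n; lra.
Qed.

Lemma ccoefE m : ccoef R m = 2 * S m / ((m + 1) * (m + 2))%N%:R.
Proof.
rewrite /ccoef /S mulr_sumr mulr_suml; apply: eq_bigr => j _.
rewrite /Tcoef natrM; ring.
Qed.

Lemma ccoef_gt0 m : 0 < ccoef R m.
Proof.
rewrite ccoefE S_val; apply: divr_gt0; last by rewrite ltr0n muln_gt0 !addn_gt0 orbT.
case: (odd m); rewrite ?subr0 ?ltr0n // -natrB // ltr0n //.
Qed.

Lemma ccoef_inv m : (ccoef R m)^-1 <= (m + 2)%:R.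
Proof.
have c0 := ccoef_gt0 m.
have H : 1 <= ccoef R m * (m + 2)%:R.
  rewrite ccoefE S_val natrM !natrD.
  have a0 : 0 <= (m%:R : R) by [].
  have -> : (m.+2)%:R - (odd m)%:R = (m%:R + 2 - (odd m)%:R : R) by rewrite -addn2 natrD.
  have -> : ((m%:R + 2 - (odd m)%:R) / ((m%:R + 1) * (m%:R + 2))) * (m%:R + 2) =
     (m%:R + 2 - (odd m)%:R) / (m%:R + 1 : R).
    by field; apply/andP; split; rewrite lt0r_neq0 //; lra.
  rewrite ler_pdivlMr; last lra.
  case: (odd m) => /=; lra.
rewrite -[_^-1]mulr1; apply: le_trans (ler_wpM2l _ H) _; first by rewrite invr_ge0 ltW.
by rewrite mulrA mulVf ?mul1r // lt0r_neq0.
Qed.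

Lemma Tcoef_ge0 m j : 0 <= Tcoef R m j.
Proof. by rewrite /Tcoef divr_ge0. Qed.

Lemma Tcoef_le1 m j : Tcoef R m j <= 1.
Proof.
rewrite /Tcoef ler_pdivrMr; last by rewrite ltr0n muln_gt0 !addn_gt0 orbT.
rewrite mul1r ler_nat; lia.
Qed.

Lemma Pbound n x : qnorm (Ppoly n x) <= (n + 2)%:R * ((n + 1)%:R * qnorm x ^+ n).
Proof.
rewrite /Ppoly qnorm_scale gtr0_norm ?invr_gt0 ?ccoef_gt0 //.
apply: ler_pM; [by rewrite invr_ge0 ltW ?ccoef_gt0 | | exact: ccoef_inv |].
  exact: qnorm_ge0.
apply: le_trans (qnorm_big _ _) _.
have -> : ((n + 1)%:R * qnorm x ^+ n) = \sum_(j < n.+1) qnorm x ^+ n.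
  by rewrite sumr_const card_ord mulr_natl addn1.
apply: ler_sum => j _.
rewrite qnorm_scale qnorm_mul !qnorm_pow qnorm_conj -exprD subnK; last by rewrite -ltnS.
rewrite ger0_norm ?Tcoef_ge0 //; rewrite -[X in _ <= X]mul1r ler_wpM2r ?Tcoef_le1 //.
by rewrite exprn_ge0 // qnorm_ge0.
Qed.

Lemma natb n : ((n.+3) * (n.+2) <= 6 ^ n.+1)%N.
Proof. elim: n => [//|n IH]; rewrite expnS; nia. Qed.

End L.

Theorem mainTheorem5 (R : realType) (rho : R) (hrho : 0 < rho) :
  exists eps : R, 0 < eps /\
    forall x : quat R,
      q0 x ^+ 2 + q1 x ^+ 2 < eps ->
      q0 x ^+ 2 + q2 x ^+ 2 < eps ->
      q0 x ^+ 2 + q3 x ^+ 2 < eps ->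
      forall n : nat, (1 <= n)%N -> qnorm (Ppoly n x) < rho ^+ n.
Proof.
exists (rho ^+ 2 / 108); split; first by rewrite divr_gt0 // exprn_gt0.
move=> x h1 h2 h3 [//|n] _.
have r0 := @qnorm_ge0 R x.
have hr : qnorm x < rho / 6.
  rewrite -(ltr_pXn2r (n:=2)) // ?nnegrE ?divr_ge0 ?ltW //.
  rewrite qnorm_sqr /N2.
  have := sqr_ge0 (q0 x).
  have -> : (rho / 6) ^+ 2 = 3 * (rho ^+ 2 / 108) by rewrite expr_div_n; field.
  lra.
apply: le_lt_trans (Pbound _ _ _) _.
have hp : qnorm x ^+ n.+1 < (rho / 6) ^+ n.+1 by rewrite ltrXn2r.
have hn := natb n.
have hk : ((n.+1 + 2) * (n.+1 + 1))%:R <= (6 : R) ^+ n.+1.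
  by rewrite -natrX ler_nat !addn2 !addn1.
rewrite mulrA -natrM.
apply: (@lt_le_trans _ _ (((n.+1 + 2) * (n.+1 + 1))%:R * (rho / 6) ^+ n.+1)).
  by rewrite ltr_pM2l // ltr0n muln_gt0 !addn_gt0 orbT.
apply: le_trans (ler_wpM2r _ hk) _; first by rewrite exprn_ge0 // divr_ge0 ?ltW.
by rewrite -exprMn mulrC divfK // pnatr_eq0.
Qed.
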